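(* Fix $m\ge1$ and write $x=t_m$. Let $H^{(1)}(x),\dots,H^{(m)}(x)$ be arbitrary Laurent series of the form $H^{(a)}=z^a+\sum_{l\ge1}H^a_l(x)z^{-l}$ with coefficients smooth functions of $x$, and set $H^{(0)}=1$. Define $H^{(j)}$ for $j>m$ recursively by $$H^{(j+m)}=\Big(\frac{\partial}{\partial x}+H^{(m)}\Big)H^{(j)}-\sum_{l=1}^{j}H^m_lH^{(j-l)}-\sum_{l=1}^{m}H^j_lH^{(m-l)},\qquad j\ge0 .$$ Then each $H^{(j)}$ is of the form $z^j+\sum_{l\ge1}H^j_l(x)z^{-l}$, where the $H^j_l$ are differential polynomials in the coefficients of $H^{(1)},\dots,H^{(m)}$, and $x\mapsto(H^{(k)}(x))_{k\ge0}$ is an integral curve of $X_m$ in $\mathcal H$. Conversely, every integral curve of $X_m$ (parametrized by $x=t_m$) is obtained in this way from its first $m$ currents. Hence the space $\mathcal Q_m$ of orbits of $X_m$ is identified with the space of $m$-tuples $(H^{(1)}(x),\dots,H^{(m)}(x))$ of such Laurent series with arbitrary $x$-dependent coefficients.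
   Context: Let $z$ be a formal variable and $\mathcal L$ the space of formal Laurent series $\sum_{j\le N} l_j z^j$ (finitely many positive powers of $z$). Let $\mathcal H$ be the set of sequences $H=(H^{(k)})_{k\ge0}$ of elements of $\mathcal L$ with $H^{(0)}=1$ and, for $k\ge1$, $H^{(k)}=z^k+\sum_{l\ge1}H^k_l z^{-l}$; the coefficients $H^k_l$ are coordinates on $\mathcal H$, and we set $H^0_l=0$. The central system (CS) is the family of vector fields $X_j$, $j\ge1$, on $\mathcal H$, with associated times $t_j$, defined by $$\frac{\partial H^{(k)}}{\partial t_j}=H^{(j+k)}-H^{(j)}H^{(k)}+\sum_{l=1}^{k}H^j_lH^{(k-l)}+\sum_{l=1}^{j}H^k_lH^{(j-l)},\qquad k\ge0;$$ the right-hand side contains only negative powers of $z$, so this determines the components $X_j(H^k_l)$. *)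

(* Defs.v *)
From HB Require Import structures.
From mathcomp Require Import all_boot all_order all_algebra.
From mathcomp Require Import all_classical all_reals all_analysis.

Set Implicit Arguments.
Unset Strict Implicit.
Unset Printing Implicit Defensive.

Import Order.TTheory GRing.Theory Num.Theory.
Local Open Scope ring_scope.

(* Formal Laurent series with finitely many positive powers of z.            *)
(* [Laurent N s] represents  sum_{n >= 0} s n * z^(N - n).                    *)
(* Every such pair is a genuine element of the space L (finitely many        *)
(* positive powers); the representation is not unique, so series are         *)
(* compared through their coefficients [lcoef].                               *)
Record laurent (A : Type) := Laurent { ltop : int ; lseq : nat -> A }.

Section Laurent.
Variable A : comPzRingType.

Definition lcoef (f : laurent A) (p : int) : A :=
  if p <= ltop f then lseq f (absz (ltop f - p)) else 0.

Definition lzero : laurent A := Laurent 0 (fun _ => 0).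

Definition lmon (k : int) : laurent A :=
  Laurent k (fun n => if n == 0%N then 1 else 0).

Definition ladd (f g : laurent A) : laurent A :=
  let N := Num.max (ltop f) (ltop g) in
  Laurent N (fun n => lcoef f (N - n%:Z) + lcoef g (N - n%:Z)).

Definition lopp (f : laurent A) : laurent A :=
  Laurent (ltop f) (fun n => - lseq f n).

Definition lsub (f g : laurent A) : laurent A := ladd f (lopp g).

Definition lmul (f g : laurent A) : laurent A :=
  Laurent (ltop f + ltop g)
    (fun n => \sum_(i < n.+1) lseq f i * lseq g (n - i)%N).

Definition lscale (a : A) (f : laurent A) : laurent A :=
  Laurent (ltop f) (fun n => a * lseq f n).

Fixpoint lsum1 (n : nat) (F : nat -> laurent A) : laurent A :=
  match n with
  | 0%N => lzero
  | n'.+1 => ladd (lsum1 n' F) (F n)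
  end.

(* the series  z^k + sum_{l >= 1} c l * z^(-l)   (c 0 is ignored) *)
Definition hseries (k : nat) (c : nat -> A) : laurent A :=
  Laurent k%:Z (fun n => if n == 0%N then 1
                         else if (n <= k)%N then 0 else c (n - k)%N).

Definition negcoef (f : laurent A) (l : nat) : A := lcoef f (- l%:Z).

End Laurent.

Section CentralSystem.
Variable R : realType.

(* A point of H: P k l = H^k_l (k, l >= 1; other entries are ignored);
   H^(0) = 1 and H^(k) = z^k + sum_{l>=1} H^k_l z^(-l). *)
Definition pointH (P : nat -> nat -> R) (k : nat) : laurent R :=
  if k == 0%N then lmon R 0 else hseries k (P k).

(* right-hand side of the central system for d H^(k) / d t_j *)
Definition csRHS (A : comPzRingType) (H : nat -> laurent A) (j k : nat)
  : laurent A :=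
  ladd (ladd (lsub (H (j + k)%N) (lmul (H j) (H k)))
             (lsum1 k (fun l => lscale (negcoef (H j) l) (H (k - l)%N))))
       (lsum1 j (fun l => lscale (negcoef (H k) l) (H (j - l)%N))).

(* component X_j(H^k_l) of the vector field X_j at the point P *)
Definition Xfield (j k l : nat) (P : nat -> nat -> R) : R :=
  negcoef (csRHS (pointH P) j k) l.

Definition smooth (f : R -> R) : Prop :=
  forall (n : nat) (x : R), derivable (derive1n n f) x 1.

(* A curve x |-> (H^k_l(x)) in H, given by its coordinate functions
   C k l (k, l >= 1), is an integral curve of X_j (parametrized by x = t_j). *)
Definition is_integral_curve (j : nat) (C : nat -> nat -> R -> R) : Prop :=
  (forall k l, (0 < k)%N -> (0 < l)%N -> smooth (C k l)) /\
  (forall k l x, (0 < k)%N -> (0 < l)%N ->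
     derive1 (C k l) x = Xfield j k l (fun k' l' => C k' l' x)).

(* Laurent series with x-dependent coefficients: coefficient ring R -> R. *)
Definition lder (f : laurent (R -> R)) : laurent (R -> R) :=
  Laurent (ltop f) (fun n => derive1 (lseq f n)).

Definition recRHS (m : nat) (H : nat -> laurent (R -> R)) (j : nat)
  : laurent (R -> R) :=
  lsub (lsub (ladd (lder (H j)) (lmul (H m) (H j)))
             (lsum1 j (fun l => lscale (negcoef (H m) l) (H (j - l)%N))))
       (lsum1 m (fun l => lscale (negcoef (H j) l) (H (m - l)%N))).

(* Hhist m h n k = H^(k) for k < n, where H^(0) = 1,
   H^(a) = z^a + sum_l h a l z^(-l) for 1 <= a <= m, and
   H^(j+m) = recRHS m H j for j >= 1. *)
Fixpoint Hhist (m : nat) (h : nat -> nat -> R -> R) (n : nat)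
  : nat -> laurent (R -> R) :=
  match n with
  | 0%N => fun _ => lmon (R -> R) 0
  | n'.+1 => fun k =>
      if (k <= n')%N then Hhist m h n' k
      else if k == 0%N then lmon (R -> R) 0
      else if (k <= m)%N then hseries k (h k)
      else recRHS m (Hhist m h n') (k - m)%N
  end.

Definition Hrec (m : nat) (h : nat -> nat -> R -> R) (k : nat)
  : laurent (R -> R) := Hhist m h k.+1 k.

(* Differential polynomials (real constant coefficients) in the variables
   H^a_l; DVar a l n stands for the n-th x-derivative of H^a_l. *)
Inductive dpoly :=
  | DVar of nat & nat & nat
  | DConst of R
  | DAdd of dpoly & dpoly
  | DMul of dpoly & dpoly.

Fixpoint deval (h : nat -> nat -> R -> R) (p : dpoly) : R -> R :=
  match p with
  | DVar a l n => derive1n n (h a l)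
  | DConst c => fun _ => c
  | DAdd p q => fun x => deval h p x + deval h q x
  | DMul p q => fun x => deval h p x * deval h q x
  end.

Fixpoint dvars_in (m : nat) (p : dpoly) : Prop :=
  match p with
  | DVar a l n => (0 < a <= m)%N /\ (0 < l)%N
  | DConst _ => True
  | DAdd p q => dvars_in m p /\ dvars_in m q
  | DMul p q => dvars_in m p /\ dvars_in m q
  end.

End CentralSystem.

(* Main.v *)
Require Import Defs.
From HB Require Import structures.
From mathcomp Require Import all_boot all_order all_algebra.
From mathcomp Require Import all_classical all_reals all_analysis.
From mathcomp Require Import zify ring.
Import Order.TTheory GRing.Theory Num.Theory.
Local Open Scope ring_scope.



Section Alg.
Context {A : comPzRingType}.

Lemma absz_sub (N q : int) : q <= N -> N - (absz (N - q)%R)%:Z = q.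
Proof. move=> h; lia. Qed.

Lemma lcoef_gt (f : laurent A) q : ltop f < q -> lcoef f q = 0.
Proof. by rewrite /lcoef leNgt => ->. Qed.

Lemma lcoef_add (f g : laurent A) q : lcoef (ladd f g) q = lcoef f q + lcoef g q.
Proof.
rewrite /ladd {1}/lcoef /=; set N := Num.max _ _.
case: ifP => hq; first by rewrite absz_sub.
have h1 : ltop f <= N by rewrite le_max lexx.
have h2 : ltop g <= N by rewrite le_max lexx orbT.
rewrite !lcoef_gt ?addr0 //.
- by apply: (le_lt_trans h2); rewrite ltNge hq.
- by apply: (le_lt_trans h1); rewrite ltNge hq.
Qed.

Lemma lcoef_opp (f : laurent A) q : lcoef (lopp f) q = - lcoef f q.
Proof. by rewrite /lcoef /=; case: ifP => //; rewrite oppr0. Qed.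

Lemma lcoef_sub (f g : laurent A) q : lcoef (lsub f g) q = lcoef f q - lcoef g q.
Proof. by rewrite /lsub lcoef_add lcoef_opp. Qed.

Lemma lcoef_scale a (f : laurent A) q : lcoef (lscale a f) q = a * lcoef f q.
Proof. by rewrite /lcoef /=; case: ifP => //; rewrite mulr0. Qed.

Lemma lcoef_mon k q : lcoef (lmon A k) q = (q == k)%:R.
Proof.
rewrite /lcoef /=; case: ifP => hq.
  have [->|neq] := eqVneq q k; first by rewrite subrr.
  by have -> : (absz (k - q)%R == 0%N) = false by lia.
by rewrite eq_sym lt_eqF // ltNge hq.
Qed.

Lemma lcoef_zero q : lcoef (lzero A) q = 0.
Proof. by rewrite /lcoef /=; case: ifP. Qed.

Lemma lcoef_lsum1 n (F : nat -> laurent A) q :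
  lcoef (lsum1 n F) q = \sum_(i < n) lcoef (F i.+1) q.
Proof.
elim: n => [|n IH] /=; first by rewrite big_ord0 lcoef_zero.
by rewrite lcoef_add IH big_ord_recr.
Qed.

Lemma lcoef_hseries k (c : nat -> A) q :
  lcoef (hseries k c) q = if 0 <= q then (q == k%:Z)%:R else c (absz q).
Proof.
rewrite /lcoef /=; case: (lerP q k) => hqk.
  case: (lerP 0 q) => hq0.
    have [->|neq] := eqVneq q k; first by rewrite subrr.
    have -> : (absz (k%:Z - q)%R == 0%N) = false by lia.
    by have -> : (absz (k%:Z - q)%R <= k)%N by lia.
  have -> : (absz (k%:Z - q)%R == 0%N) = false by lia.
  have -> : (absz (k%:Z - q)%R <= k)%N = false by lia.
  congr c; lia.
have -> : 0 <= q by lia.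
by have -> : (q == k%:Z) = false by lia.
Qed.

Definition pad (T : int) (f : laurent A) := Laurent T (fun n => lcoef f (T - n%:Z)).

Lemma lcoef_pad T f q : lcoef (pad T f) q = if q <= T then lcoef f q else 0.
Proof. by rewrite /lcoef /=; case: ifP => // h; rewrite absz_sub. Qed.

Lemma mul_step_l (f1 f0 g : laurent A) :
  ltop f1 = ltop f0 + 1 -> lseq f1 0 = 0 -> (forall n, lseq f1 n.+1 = lseq f0 n) ->
  forall q, lcoef (lmul f1 g) q = lcoef (lmul f0 g) q.
Proof.
move=> ht h0 hS q; rewrite /lcoef /= ht.
case: (lerP q (ltop f0 + ltop g)) => h.
  have -> : q <= ltop f0 + 1 + ltop g by lia.
  have -> : absz (ltop f0 + 1 + ltop g - q)%R = (absz (ltop f0 + ltop g - q)%R).+1 by lia.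
  rewrite big_ord_recl h0 mul0r add0r; apply: eq_bigr => i _.
  by rewrite /= hS subSS.
case: ifP => // h1.
have -> : absz (ltop f0 + 1 + ltop g - q)%R = 0%N by lia.
by rewrite big_ord1 h0 mul0r.
Qed.

Lemma mul_step_r (f g1 g0 : laurent A) :
  ltop g1 = ltop g0 + 1 -> lseq g1 0 = 0 -> (forall n, lseq g1 n.+1 = lseq g0 n) ->
  forall q, lcoef (lmul f g1) q = lcoef (lmul f g0) q.
Proof.
move=> ht h0 hS q; rewrite /lcoef /= ht.
case: (lerP q (ltop f + ltop g0)) => h.
  have -> : q <= ltop f + (ltop g0 + 1) by lia.
  have -> : absz (ltop f + (ltop g0 + 1) - q)%R = (absz (ltop f + ltop g0 - q)%R).+1 by lia.
  rewrite big_ord_recr /= subnn h0 mulr0 addr0; apply: eq_bigr => i _.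
  by rewrite subSn ?hS // -ltnS.
case: ifP => // h1.
have -> : absz (ltop f + (ltop g0 + 1) - q)%R = 0%N by lia.
by rewrite big_ord1 h0 mulr0.
Qed.

Lemma pad_self (f : laurent A) : pad (ltop f) f = f.
Proof.
case: f => t s; rewrite /pad /=; congr Laurent; apply: funext => n.
rewrite /lcoef /=; have -> : t - n%:Z <= t by lia.
congr s; lia.
Qed.

Lemma pad_mul_l d (f g : laurent A) q :
  lcoef (lmul (pad (ltop f + d%:Z) f) g) q = lcoef (lmul f g) q.
Proof.
elim: d q => [|d IH] q; first by rewrite addr0 pad_self.
rewrite -IH; apply: mul_step_l => /=.
- lia.
- by rewrite lcoef_gt //; lia.
- by move=> n; congr lcoef; lia.
Qed.

Lemma pad_mul_r d (f g : laurent A) q :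
  lcoef (lmul f (pad (ltop g + d%:Z) g)) q = lcoef (lmul f g) q.
Proof.
elim: d q => [|d IH] q; first by rewrite addr0 pad_self.
rewrite -IH; apply: mul_step_r => /=.
- lia.
- by rewrite lcoef_gt //; lia.
- by move=> n; congr lcoef; lia.
Qed.

Lemma pad_bound a (f : laurent A) : (forall q, a < q -> lcoef f q = 0) ->
  forall q, lcoef (pad a f) q = lcoef f q.
Proof. by move=> hb q; rewrite lcoef_pad; case: lerP => // h; rewrite hb. Qed.

Lemma pad_pad T a (f : laurent A) : (forall q, a < q -> lcoef f q = 0) ->
  pad T (pad a f) = pad T f.
Proof. by move=> hb; rewrite /pad; congr Laurent; apply: funext => n; rewrite pad_bound. Qed.

Lemma mul_pad_l a (f g : laurent A) : (forall q, a < q -> lcoef f q = 0) ->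
  forall q, lcoef (lmul f g) q = lcoef (lmul (pad a f) g) q.
Proof.
move=> hb q; set T := a + (absz (ltop f - a)%R)%:Z.
have e1 : T = ltop f + (absz (T - ltop f)%R)%:Z by rewrite /T; lia.
have e2 : T = ltop (pad a f) + (absz (T - a)%R)%:Z by rewrite /T /=; lia.
rewrite -(pad_mul_l (absz (T - ltop f)%R)) -e1.
by rewrite -(pad_mul_l (absz (T - a)%R) (pad a f)) -e2 pad_pad.
Qed.

Lemma mul_pad_r b (f g : laurent A) : (forall q, b < q -> lcoef g q = 0) ->
  forall q, lcoef (lmul f g) q = lcoef (lmul f (pad b g)) q.
Proof.
move=> hb q; set T := b + (absz (ltop g - b)%R)%:Z.
have e1 : T = ltop g + (absz (T - ltop g)%R)%:Z by rewrite /T; lia.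
have e2 : T = ltop (pad b g) + (absz (T - b)%R)%:Z by rewrite /T /=; lia.
rewrite -(pad_mul_r (absz (T - ltop g)%R)) -e1.
by rewrite -(pad_mul_r (absz (T - b)%R) _ (pad b g)) -e2 pad_pad.
Qed.

Lemma mul_coef (a b : int) (f g : laurent A) q :
  (forall q, a < q -> lcoef f q = 0) -> (forall q, b < q -> lcoef g q = 0) ->
  lcoef (lmul f g) q = if q <= a + b then
    \sum_(i < (absz (a + b - q)%R).+1)
       lcoef f (a - i%:Z) * lcoef g (b - (absz (a + b - q)%R - i)%:Z) else 0.
Proof. by move=> hf hg; rewrite (@mul_pad_l a f g hf) (@mul_pad_r b (pad a f) g hg). Qed.

Lemma mul_mon_l a (g : laurent A) q : lcoef (lmul (lmon A a) g) q = lcoef g (q - a).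
Proof.
rewrite /lcoef /=; case: (lerP q (a + ltop g)) => h.
  have -> : q - a <= ltop g by lia.
  rewrite big_ord_recl /= mul1r big1 ?addr0; last by move=> i _; rewrite mul0r.
  rewrite subn0; congr lseq; lia.
by have -> : (q - a <= ltop g) = false by lia.
Qed.

Lemma mul_mon_r b (f : laurent A) q : lcoef (lmul f (lmon A b)) q = lcoef f (q - b).
Proof.
rewrite /lcoef /=; case: (lerP q (ltop f + b)) => h.
  have -> : q - b <= ltop f by lia.
  rewrite big_ord_recr /= subnn eqxx mulr1 big1 ?add0r.
    congr lseq; lia.
  move=> i _; have -> : (absz (ltop f + b - q)%R - i == 0)%N = false.
    by have := ltn_ord i; lia.
  by rewrite mulr0.
by have -> : (q - b <= ltop f) = false by lia.
Qed.

Lemma mul_addl (f f' g : laurent A) q :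
  lcoef (lmul (ladd f f') g) q = lcoef (lmul f g) q + lcoef (lmul f' g) q.
Proof.
set a := Num.max (ltop f) (ltop f').
have hf : forall q, a < q -> lcoef f q = 0.
  by move=> r hr; apply: lcoef_gt; apply: le_lt_trans hr; rewrite le_max lexx.
have hf' : forall q, a < q -> lcoef f' q = 0.
  by move=> r hr; apply: lcoef_gt; apply: le_lt_trans hr; rewrite le_max lexx orbT.
have hs : forall q, a < q -> lcoef (ladd f f') q = 0.
  by move=> r hr; rewrite lcoef_add hf // hf' // addr0.
have hg : forall q, ltop g < q -> lcoef g q = 0 by move=> r; apply: lcoef_gt.
rewrite (mul_coef _ _ _ _ q hs hg) (mul_coef _ _ _ _ q hf hg) (mul_coef _ _ _ _ q hf' hg).
case: ifP => _; last by rewrite addr0.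
by rewrite -big_split; apply: eq_bigr => i _; rewrite lcoef_add mulrDl.
Qed.

Lemma mul_addr (f g g' : laurent A) q :
  lcoef (lmul f (ladd g g')) q = lcoef (lmul f g) q + lcoef (lmul f g') q.
Proof.
set b := Num.max (ltop g) (ltop g').
have hg : forall q, b < q -> lcoef g q = 0.
  by move=> r hr; apply: lcoef_gt; apply: le_lt_trans hr; rewrite le_max lexx.
have hg' : forall q, b < q -> lcoef g' q = 0.
  by move=> r hr; apply: lcoef_gt; apply: le_lt_trans hr; rewrite le_max lexx orbT.
have hs : forall q, b < q -> lcoef (ladd g g') q = 0.
  by move=> r hr; rewrite lcoef_add hg // hg' // addr0.
have hf : forall q, ltop f < q -> lcoef f q = 0 by move=> r; apply: lcoef_gt.
rewrite (mul_coef _ _ _ _ q hf hs) (mul_coef _ _ _ _ q hf hg) (mul_coef _ _ _ _ q hf hg').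
case: ifP => _; last by rewrite addr0.
by rewrite -big_split; apply: eq_bigr => i _; rewrite lcoef_add mulrDr.
Qed.

Lemma mul_congr (f f' g g' : laurent A) :
  (forall q, lcoef f q = lcoef f' q) -> (forall q, lcoef g q = lcoef g' q) ->
  forall q, lcoef (lmul f g) q = lcoef (lmul f' g') q.
Proof.
move=> ef eg q.
have hf : forall q, ltop f < q -> lcoef f q = 0 by move=> r; apply: lcoef_gt.
have hf' : forall q, ltop f < q -> lcoef f' q = 0 by move=> r hr; rewrite -ef lcoef_gt.
have hg : forall q, ltop g < q -> lcoef g q = 0 by move=> r; apply: lcoef_gt.
have hg' : forall q, ltop g < q -> lcoef g' q = 0 by move=> r hr; rewrite -eg lcoef_gt.
rewrite (mul_coef _ _ _ _ q hf hg) (mul_coef _ _ _ _ q hf' hg').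
by case: ifP => // _; apply: eq_bigr => i _; rewrite ef eg.
Qed.

Lemma mul_shape (a b : nat) (f g : laurent A) :
  (forall q, 0 <= q -> lcoef f q = (q == a%:Z)%:R) ->
  (forall q, 0 <= q -> lcoef g q = (q == b%:Z)%:R) ->
  forall P : nat, lcoef (lmul f g) P = (P == (a + b)%N)%:R
     + (if (P < a)%N then lcoef g (P%:Z - a%:Z) else 0)
     + (if (P < b)%N then lcoef f (P%:Z - b%:Z) else 0).
Proof.
move=> sf sg P.
pose Nf := lsub f (lmon A a); pose Ng := lsub g (lmon A b).
have ef : forall q, lcoef f q = lcoef (ladd (lmon A a) Nf) q.
  by move=> q; rewrite lcoef_add lcoef_sub addrC subrK.
have eg : forall q, lcoef g q = lcoef (ladd (lmon A b) Ng) q.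
  by move=> q; rewrite lcoef_add lcoef_sub addrC subrK.
have bNf : forall q, -1 < q -> lcoef Nf q = 0.
  by move=> q hq; rewrite lcoef_sub lcoef_mon sf ?subrr //; lia.
have bNg : forall q, -1 < q -> lcoef Ng q = 0.
  by move=> q hq; rewrite lcoef_sub lcoef_mon sg ?subrr //; lia.
rewrite (mul_congr _ _ _ _ ef eg) mul_addl (mul_addr (lmon A a) (lmon A b) Ng).
rewrite (mul_addr Nf (lmon A b) Ng) !mul_mon_l !mul_mon_r.
rewrite (mul_coef _ _ _ _ _ bNf bNg).
have -> : (P%:Z <= -1 + -1) = false by lia.
rewrite addr0 lcoef_mon !lcoef_sub !lcoef_mon.
have e2 : lcoef g (P%:Z - a%:Z) - (P%:Z - a%:Z == b%:Z)%:R
    = if (P < a)%N then lcoef g (P%:Z - a%:Z) else 0.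
  case: ltnP => h.
    have -> : (P%:Z - a%:Z == b%:Z) = false by lia.
    by rewrite subr0.
  have hq : 0 <= P%:Z - a%:Z by lia.
  by rewrite sg // subrr.
have e3 : lcoef f (P%:Z - b%:Z) - (P%:Z - b%:Z == a%:Z)%:R
    = if (P < b)%N then lcoef f (P%:Z - b%:Z) else 0.
  case: ltnP => h.
    have -> : (P%:Z - b%:Z == a%:Z) = false by lia.
    by rewrite subr0.
  have hq : 0 <= P%:Z - b%:Z by lia.
  by rewrite sf // subrr.
have e1 : (P%:Z - a%:Z == b%:Z) = (P == (a + b)%N) by apply/eqP/eqP; lia.
by rewrite e2 e3 e1.
Qed.

Lemma sum_shape j (c : nat -> A) (G : nat -> laurent A) :
  (forall i, (i <= j)%N -> forall q, 0 <= q -> lcoef (G i) q = (q == i%:Z)%:R) ->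
  forall P : nat, lcoef (lsum1 j (fun l => lscale (c l) (G (j - l)%N))) P
     = if (P < j)%N then c (j - P)%N else 0.
Proof.
move=> sG P; rewrite lcoef_lsum1.
have hP : 0 <= P%:Z by lia.
under eq_bigr => i _ do rewrite lcoef_scale sG ?leq_subr //.
case: (ltnP P j) => hPj.
  have hlt : (j - P.+1 < j)%N by lia.
  rewrite (bigD1 (Ordinal hlt)) //= [X in _ + X]big1; last first.
    move=> i; rewrite -val_eqE /= => hi.
    have -> : (P%:Z == (j - i.+1)%N%:Z) = false by move: hi => /eqP; have := ltn_ord i; lia.
    by rewrite mulr0.
  have -> : (P%:Z == (j - (j - P.+1).+1)%N%:Z) by apply/eqP; lia.
  rewrite mulr1 addr0; congr c; lia.
rewrite big1 // => i _.
have -> : (P%:Z == (j - i.+1)%N%:Z) = false by have := ltn_ord i; lia.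
by rewrite mulr0.
Qed.

Definition Rm (H : nat -> laurent A) j k q :=
  lcoef (lmul (H j) (H k)) q
  - lcoef (lsum1 k (fun l => lscale (negcoef (H j) l) (H (k - l)%N))) q
  - lcoef (lsum1 j (fun l => lscale (negcoef (H k) l) (H (j - l)%N))) q.

Lemma csRHS_coef (H : nat -> laurent A) j k q :
  lcoef (csRHS H j k) q = lcoef (H (j + k)%N) q - Rm H j k q.
Proof. rewrite /csRHS /Rm !lcoef_add ?lcoef_sub ?lcoef_opp; ring. Qed.

End Alg.



Section Real.
Context {R : realType}.

Lemma bool_eval (b : bool) (x : R) : ((b%:R : R -> R) x) = b%:R.
Proof. by case: b. Qed.

Lemma sum_eval n (F : 'I_n -> R -> R) (x : R) :
  (\sum_(i < n) F i) x = \sum_(i < n) F i x.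
Proof.
elim: n F => [|n IH] F; first by rewrite !big_ord0.
have addE : forall (u v : R -> R), (u + v) x = u x + v x by [].
rewrite !big_ord_recr -(IH (fun i => F (widen_ord (leqnSn n) i))). reflexivity.
Qed.

Lemma der_cst0 (c : R) : derive1 (fun _ : R => c) = 0.
Proof. by apply: funext => x; rewrite derive1_cst. Qed.

Lemma der_bool (b : bool) : derive1 (b%:R : R -> R) = 0.
Proof. by case: b; rewrite ?der_cst0 //; apply: der_cst0. Qed.

Lemma lcoef_lder (f : laurent (R -> R)) q : lcoef (lder f) q = derive1 (lcoef f q).
Proof. by rewrite /lcoef /=; case: ifP => // _; rewrite (der_cst0 0). Qed.

Lemma Hhist_le m h n k : (k <= n)%N -> @Hhist R m h n k = Hhist m h k k.
Proof.
elim: n k => [|n IH] k hk; first by move: hk; rewrite leqn0 => /eqP ->.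
rewrite /=; case: leqP => h1; first exact: IH.
have ek : k = n.+1 by lia.
subst k; by rewrite [in RHS]/= ltnn.
Qed.

Lemma Hrec_hist m h k : @Hrec R m h k = Hhist m h k k.
Proof. by rewrite /Hrec Hhist_le. Qed.

Lemma lsum1_ext (A : comPzRingType) n (F F' : nat -> laurent A) :
  (forall l, (0 < l <= n)%N -> F l = F' l) -> lsum1 n F = lsum1 n F'.
Proof.
elim: n => [|n IH] E //=; rewrite E ?leqnn // IH // => l /andP[h1 h2].
by rewrite E // h1 leqW.
Qed.

Lemma recRHS_ext m (H H' : nat -> laurent (R -> R)) j :
  (forall i, (i <= maxn j m)%N -> H i = H' i) -> recRHS m H j = recRHS m H' j.
Proof.
move=> E; rewrite /recRHS E ?leq_maxl // (E m) ?leq_maxr //.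
congr (lsub (lsub _ _) _); apply: lsum1_ext => l /andP[h1 h2]; rewrite E //; lia.
Qed.

Lemma Hrec0 m h : @Hrec R m h 0 = lmon _ 0.
Proof. by []. Qed.

Lemma Hrec_hs m h k : (0 < k <= m)%N -> @Hrec R m h k = hseries k (h k).
Proof.
move=> /andP[h1 h2]; rewrite Hrec_hist; case: k h1 h2 => // k _ h2 /=.
by rewrite ltnn h2.
Qed.

Lemma Hrec_rec m h k : (0 < m)%N -> (m < k)%N ->
  @Hrec R m h k = recRHS m (Hrec m h) (k - m).
Proof.
move=> hm hk; rewrite Hrec_hist; case: k hk => // k hk /=.
rewrite ltnn; have -> : (k < m)%N = false by lia.
apply: recRHS_ext => i hi; rewrite Hhist_le ?Hrec_hist //; lia.
Qed.

Lemma recRHS_coef m (G : nat -> laurent (R -> R)) j q :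
  lcoef (recRHS m G j) q = lcoef (lder (G j)) q + Rm G m j q.
Proof. rewrite /recRHS /Rm !lcoef_add ?lcoef_opp; ring. Qed.

Lemma Hrec_shape m h k : (0 < m)%N ->
  forall q, 0 <= q -> lcoef (@Hrec R m h k) q = (q == k%:Z)%:R.
Proof.
move=> hm; elim: k {-2}k (leqnn k) => [|n IH] k hk q hq.
  by move: hk; rewrite leqn0 => /eqP ->; rewrite Hrec0 lcoef_mon.
case: (leqP k n) => hkn; first exact: IH.
have ek : k = n.+1 by lia.
case: (leqP k m) => hkm.
  by rewrite Hrec_hs ?lcoef_hseries ?hq //; lia.
set j := (k - m)%N.
have sG : forall i, (i <= n)%N -> forall q, 0 <= q -> lcoef (Hrec m h i) q = (q == i%:Z)%:R.
  by move=> i hi; apply: IH.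
have ej : k = (m + j)%N by rewrite /j; lia.
have [P eP] : exists P : nat, q = P%:Z by exists (absz q); lia.
rewrite Hrec_rec // recRHS_coef lcoef_lder -/j eP sG; last 2 first.
- by rewrite /j; lia.
- by [].
rewrite der_bool add0r /Rm.
rewrite (mul_shape m j); last 2 first.
- by move=> r hr; apply: sG => //; lia.
- by move=> r hr; apply: sG => //; rewrite /j; lia.
rewrite (sum_shape j (negcoef (Hrec m h m)) (Hrec m h)); last by move=> i hi r hr; apply: sG => //; rewrite /j; lia.
rewrite (sum_shape m (negcoef (Hrec m h j)) (Hrec m h)); last by move=> i hi r hr; apply: sG => //; lia.
rewrite -ej /negcoef.
have e1 : forall (b : nat), (P < b)%N -> P%:Z - b%:Z = - (b - P)%N%:Z.
  by move=> b hab; lia.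
case: (ltnP P m) => h1; case: (ltnP P j) => h2;
  rewrite ?(e1 m) ?(e1 j) //; ring.
Qed.

End Real.



Section Real2.
Context {R : realType}.

Definition Lev (x : R) (F : laurent (R -> R)) (f : laurent R) :=
  forall q, lcoef f q = lcoef F q x.

Lemma addE (u v : R -> R) x : (u + v) x = u x + v x. Proof. by []. Qed.
Lemma subE (u v : R -> R) x : (u - v) x = u x - v x. Proof. by []. Qed.
Lemma oppE (u : R -> R) x : (- u) x = - u x. Proof. by []. Qed.
Lemma mulE (u v : R -> R) x : (u * v) x = u x * v x. Proof. by []. Qed.

Lemma Lev_add x F G f g : Lev x F f -> Lev x G g -> Lev x (ladd F G) (ladd f g).
Proof. by move=> hf hg q; rewrite !lcoef_add addE hf hg. Qed.

Lemma Lev_opp x F f : Lev x F f -> Lev x (lopp F) (lopp f).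
Proof. by move=> hf q; rewrite !lcoef_opp oppE hf. Qed.

Lemma Lev_scale x C c F f : c = C x -> Lev x F f -> Lev x (lscale C F) (lscale c f).
Proof. by move=> -> hf q; rewrite !lcoef_scale mulE hf. Qed.

Lemma Lev_mon x k : Lev x (lmon (R -> R) k) (lmon R k).
Proof. by move=> q; rewrite !lcoef_mon bool_eval. Qed.

Lemma Lev_lsum1 x n F f : (forall l, (0 < l <= n)%N -> Lev x (F l) (f l)) ->
  Lev x (lsum1 n F) (lsum1 n f).
Proof.
elim: n => [|n IH] E /=; first by move=> q; rewrite !lcoef_zero.
apply: Lev_add; last by apply: E; rewrite leqnn.
by apply: IH => l /andP[h1 h2]; apply: E; rewrite h1 leqW.
Qed.

Lemma bnd1 (u v r : int) : u + (absz (v - u)%R)%:Z < r -> u < r.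
Proof. lia. Qed.
Lemma bnd2 (u v r : int) : u + (absz (v - u)%R)%:Z < r -> v < r.
Proof. lia. Qed.

Lemma Lev_mul x F G f g : Lev x F f -> Lev x G g -> Lev x (lmul F G) (lmul f g).
Proof.
move=> hf hg q.
pose a : int := ltop f + (absz (ltop F - ltop f)%R)%:Z.
pose b : int := ltop g + (absz (ltop G - ltop g)%R)%:Z.
have bf : forall q : int, a < q -> lcoef f q = 0 by move=> r hr; apply: lcoef_gt; exact: bnd1 hr.
have bF : forall q : int, a < q -> lcoef F q = 0 by move=> r hr; apply: lcoef_gt; exact: bnd2 hr.
have bg : forall q : int, b < q -> lcoef g q = 0 by move=> r hr; apply: lcoef_gt; exact: bnd1 hr.
have bG : forall q : int, b < q -> lcoef G q = 0 by move=> r hr; apply: lcoef_gt; exact: bnd2 hr.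
rewrite (mul_coef _ _ _ _ _ bf bg) (mul_coef _ _ _ _ _ bF bG).
case: ifP => _ //; rewrite sum_eval; apply: eq_bigr => i _.
by rewrite mulE hf hg.
Qed.

Lemma Rm_ev x (G : nat -> laurent (R -> R)) (H : nat -> laurent R) j k q :
  (forall i, (i <= maxn j k)%N -> Lev x (G i) (H i)) -> Rm H j k q = Rm G j k q x.
Proof.
move=> E; rewrite /Rm !subE; congr (_ - _ - _).
- by apply: Lev_mul; apply: E; rewrite ?leq_maxl ?leq_maxr.
- apply: Lev_lsum1 => l /andP[h1 h2]; apply: Lev_scale.
    by rewrite /negcoef (E j) ?leq_maxl.
  by apply: E; lia.
- apply: Lev_lsum1 => l /andP[h1 h2]; apply: Lev_scale.
    by rewrite /negcoef (E k) ?leq_maxr.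
  by apply: E; lia.
Qed.

Lemma Lev_pointH x (G : laurent (R -> R)) (P : nat -> nat -> R) i : (0 < i)%N ->
  (forall q, 0 <= q -> lcoef G q = (q == i%:Z)%:R) ->
  (forall l, (0 < l)%N -> P i l = negcoef G l x) -> Lev x G (pointH P i).
Proof.
move=> hi sG hP q; rewrite /pointH; have -> : (i == 0%N) = false by lia.
rewrite lcoef_hseries; case: ifP => hq; first by rewrite sG // bool_eval.
rewrite hP; last by lia.
rewrite /negcoef (_ : - (absz q)%:Z = q) //; lia.
Qed.

Lemma part3 m h a l : (0 < a <= m)%N -> (0 < l)%N -> negcoef (@Hrec R m h a) l = h a l.
Proof.
move=> ha hl; rewrite Hrec_hs // /negcoef lcoef_hseries.
have -> : (0 <= - l%:Z) = false by lia.
by congr h; lia.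
Qed.

Lemma curve_eq m h k l x : (0 < m)%N -> (0 < k)%N -> (0 < l)%N ->
  derive1 (negcoef (@Hrec R m h k) l) x
  = Xfield m k l (fun k' l' => negcoef (Hrec m h k') l' x).
Proof.
move=> hm hk hl; set G := Hrec m h; set P := fun k' l' => negcoef (G k') l' x.
have LG : forall i, Lev x (G i) (pointH P i).
  case=> [|i]; first by rewrite /pointH /= /G Hrec0; apply: Lev_mon.
  apply: Lev_pointH => //; first by apply: Hrec_shape.
rewrite /Xfield {2}/negcoef csRHS_coef (Rm_ev x G); last by move=> i _; apply: LG.
rewrite LG /G (Hrec_rec m h (m + k)) ?addKn //; last by lia.
by rewrite recRHS_coef lcoef_lder addE addrK.
Qed.

Lemma converse m C : (0 < m)%N -> is_integral_curve m C ->
  forall k l, (0 < k)%N -> (0 < l)%N -> C k l = negcoef (@Hrec R m C k) l.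
Proof.
move=> hm [_ hC]; set G := Hrec m C.
suff: forall n k, (k <= n)%N -> forall l, (0 < k)%N -> (0 < l)%N -> C k l = negcoef (G k) l.
  by move=> H k l hk hl; apply: (H k).
elim=> [|n IH] k hkn l hk hl; first by lia.
case: (leqP k n) => h1; first exact: IH.
case: (leqP k m) => hkm; first by rewrite /G part3 // hk hkm.
set j := (k - m)%N.
have ej : k = (m + j)%N by rewrite /j; lia.
apply: funext => x.
have := hC j l x ltac:(rewrite /j; lia) hl.
set P := fun k' l' => C k' l' x.
have LG : forall i, (i <= maxn m j)%N -> Lev x (G i) (pointH P i).
  case=> [|i] hi; first by rewrite /pointH /= /G Hrec0; apply: Lev_mon.
  apply: Lev_pointH => //; first by apply: Hrec_shape.
  move=> l' hl'; rewrite /P (IH i.+1) //; lia.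
rewrite /Xfield {1}/negcoef csRHS_coef (Rm_ev x G _ _ _ _ LG).
have -> : lcoef (pointH P (m + j)) (- l%:Z) = C (m + j)%N l x.
  rewrite /pointH; have -> : (m + j == 0)%N = false by lia.
  rewrite lcoef_hseries; have -> : (0 <= - l%:Z) = false by lia.
  by rewrite /P; congr C; lia.
move=> eq.
rewrite /G Hrec_rec // -/j /negcoef recRHS_coef lcoef_lder addE.
have <- : C j l = lcoef (G j) (- l%:Z) by apply: IH; rewrite /j; lia.
by rewrite eq ej subrK.
Qed.

End Real2.



Section Real3.
Context {R : realType}.
Variable m : nat.

Fixpoint ddiff (p : dpoly R) : dpoly R :=
  match p with
  | DVar a l n => DVar R a l n.+1
  | DConst _ => DConst 0
  | DAdd p q => DAdd (ddiff p) (ddiff q)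
  | DMul p q => DAdd (DMul (ddiff p) q) (DMul p (ddiff q))
  end.

Definition Hyp (h : nat -> nat -> R -> R) :=
  forall a l, (0 < a <= m)%N -> (0 < l)%N -> smooth (h a l).

Lemma dvars_ddiff p : dvars_in m p -> dvars_in m (ddiff p).
Proof. by elim: p => //= [p IHp q IHq|p IHp q IHq] [hp hq]; do ! split; auto. Qed.

Lemma deval_der h p : Hyp h -> dvars_in m p -> forall x,
  derivable (deval h p) x 1 /\ derive1 (deval h p) x = deval h (ddiff p) x.
Proof.
move=> hH; elim: p => [a l n|c|p IHp q IHq|p IHp q IHq] /= hv x.
- by case: hv => h1 h2; split => //; apply: (hH a l h1 h2).
- by split; [apply: derivable_cst | apply: derive1_cst].
- case: hv => hp hq; have [dp ep] := IHp hp x; have [dq eq] := IHq hq x.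
  change (deval h p \+ deval h q) with (deval h p + deval h q).
  split; first exact: derivableD.
  by rewrite derive1E deriveD // -!derive1E ep eq.
- case: hv => hp hq; have [dp ep] := IHp hp x; have [dq eq] := IHq hq x.
  change (deval h p \* deval h q) with (deval h p * deval h q).
  split; first exact: derivableM.
  rewrite derive1E deriveM // -!derive1E ep eq.
  rewrite /GRing.scale /=; ring.
Qed.

Lemma deval_smooth h p : Hyp h -> dvars_in m p -> smooth (deval h p).
Proof.
move=> hH hv.
have key : forall n, derive1n n (deval h p) = deval h (iter n ddiff p)
                     /\ dvars_in m (iter n ddiff p).
  elim=> [|n [IH1 IH2]] //=.
  split; last exact: dvars_ddiff.
  change (derive1n n.+1 (deval h p)) with (derive1 (derive1n n (deval h p))).
  by rewrite IH1; apply: funext => x; have [_ ->] := deval_der _ _ hH IH2 x.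
move=> n x; have [-> hv'] := key n.
by have [] := deval_der _ _ hH hv' x.
Qed.

Definition DPc (F : (nat -> nat -> R -> R) -> R -> R) :=
  exists p : dpoly R, dvars_in m p /\ forall h, Hyp h -> F h = deval h p.
Definition DPL (F : (nat -> nat -> R -> R) -> laurent (R -> R)) :=
  forall q, DPc (fun h => lcoef (F h) q).

Lemma DPc_ext F F' : (forall h, Hyp h -> F' h = F h) -> DPc F -> DPc F'.
Proof. by move=> E [p [hv hp]]; exists p; split => // h hh; rewrite E // hp. Qed.

Lemma DPc_const c : DPc (fun _ => fun _ => c).
Proof. by exists (DConst c). Qed.

Lemma DPc_bool (b : bool) : DPc (fun _ => (b%:R : R -> R)).
Proof. by exists (DConst b%:R); split => // h _; apply: funext => x /=; case: b. Qed.

Lemma DPc_zero : DPc (fun _ => 0).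
Proof. by exists (DConst 0); split => // h _; apply: funext. Qed.

Lemma DPc_add F G : DPc F -> DPc G -> DPc (fun h => F h + G h).
Proof.
move=> [p [hp ep]] [q [hq eq]]; exists (DAdd p q); split => // h hh.
by rewrite ep // eq.
Qed.

Lemma DPc_mul F G : DPc F -> DPc G -> DPc (fun h => F h * G h).
Proof.
move=> [p [hp ep]] [q [hq eq]]; exists (DMul p q); split => // h hh.
by rewrite ep // eq.
Qed.

Lemma DPc_opp F : DPc F -> DPc (fun h => - F h).
Proof.
move=> [p [hp ep]]; exists (DMul (DConst (-1)) p); split => // h hh.
by rewrite ep //; apply: funext => x /=; rewrite mulN1r.
Qed.

Lemma DPc_sum n (F : 'I_n -> _) : (forall i, DPc (F i)) -> DPc (fun h => \sum_(i < n) F i h).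
Proof.
elim: n F => [|n IH] F E.
  by apply: (DPc_ext (fun _ => 0)) => [h _|]; rewrite ?big_ord0 //; apply: DPc_zero.
apply: (DPc_ext (fun h => \sum_(i < n) F (widen_ord (leqnSn n) i) h + F ord_max h)).
  by move=> h _; rewrite big_ord_recr.
by apply: DPc_add => //; apply: IH.
Qed.

Lemma DPc_der F : DPc F -> DPc (fun h => derive1 (F h)).
Proof.
move=> [p [hp ep]]; exists (ddiff p); split; first exact: dvars_ddiff.
move=> h hh; rewrite ep //; apply: funext => x.
by have [_ ->] := deval_der _ _ hh hp x.
Qed.

Lemma DPc_var a l : (0 < a <= m)%N -> (0 < l)%N -> DPc (fun h => h a l).
Proof. by move=> ha hl; exists (DVar R a l 0). Qed.

Lemma DPL_ext F F' : (forall h, Hyp h -> forall q, lcoef (F' h) q = lcoef (F h) q) ->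
  DPL F -> DPL F'.
Proof. by move=> E D q; apply: (DPc_ext _ _ _ (D q)) => h hh; rewrite E. Qed.

Lemma DPL_add F G : DPL F -> DPL G -> DPL (fun h => ladd (F h) (G h)).
Proof.
move=> DF DG q; apply: (DPc_ext (fun h => lcoef (F h) q + lcoef (G h) q)).
  by move=> h _; rewrite lcoef_add.
exact: DPc_add.
Qed.

Lemma DPL_opp F : DPL F -> DPL (fun h => lopp (F h)).
Proof.
move=> DF q; apply: (DPc_ext (fun h => - lcoef (F h) q)).
  by move=> h _; rewrite lcoef_opp.
exact: DPc_opp.
Qed.

Lemma DPL_sub F G : DPL F -> DPL G -> DPL (fun h => lsub (F h) (G h)).
Proof. by move=> DF DG; apply: DPL_add => //; apply: DPL_opp. Qed.

Lemma DPL_scale C F : DPc C -> DPL F -> DPL (fun h => lscale (C h) (F h)).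
Proof.
move=> DC DF q; apply: (DPc_ext (fun h => C h * lcoef (F h) q)).
  by move=> h _; rewrite lcoef_scale.
exact: DPc_mul.
Qed.

Lemma DPL_lsum1 n (F : _ -> nat -> laurent (R -> R)) :
  (forall l, (0 < l <= n)%N -> DPL (fun h => F h l)) -> DPL (fun h => lsum1 n (F h)).
Proof.
move=> E q; apply: (DPc_ext (fun h => \sum_(i < n) lcoef (F h i.+1) q)).
  by move=> h _; rewrite lcoef_lsum1.
apply: DPc_sum => i; apply: E; have := ltn_ord i; lia.
Qed.

Lemma DPL_lder F : DPL F -> DPL (fun h => lder (F h)).
Proof.
move=> DF q; apply: (DPc_ext (fun h => derive1 (lcoef (F h) q))).
  by move=> h _; rewrite lcoef_lder.
exact: DPc_der.
Qed.

Lemma DPL_mon k : DPL (fun _ => lmon (R -> R) k).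
Proof.
move=> q; apply: (DPc_ext (fun _ => ((q == k)%:R : R -> R))).
  by move=> h _; rewrite lcoef_mon.
exact: DPc_bool.
Qed.

Lemma DPL_hseries a : (0 < a <= m)%N -> DPL (fun h => hseries a (h a)).
Proof.
move=> ha q; apply: (DPc_ext (fun h => if 0 <= q then ((q == a%:Z)%:R : R -> R)
                                              else h a (absz q))).
  by move=> h _; rewrite lcoef_hseries.
case hq : (0 <= q); first exact: DPc_bool.
by apply: DPc_var => //; lia.
Qed.

Lemma DPL_mul (a b : int) F G :
  (forall h, Hyp h -> forall q, a < q -> lcoef (F h) q = 0) ->
  (forall h, Hyp h -> forall q, b < q -> lcoef (G h) q = 0) ->
  DPL F -> DPL G -> DPL (fun h => lmul (F h) (G h)).
Proof.
move=> bF bG DF DG q.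
apply: (DPc_ext (fun h => if q <= a + b then
    \sum_(i < (absz (a + b - q)%R).+1)
       lcoef (F h) (a - i%:Z) * lcoef (G h) (b - (absz (a + b - q)%R - i)%:Z) else 0)).
  by move=> h hh; rewrite (mul_coef _ _ _ _ _ (bF h hh) (bG h hh)).
case: (q <= a + b); last exact: DPc_zero.
by apply: DPc_sum => i; apply: DPc_mul.
Qed.

Hypothesis hm : (0 < m)%N.

Lemma DPL_Hrec k : DPL (fun h => Hrec m h k).
Proof.
elim: k {-2}k (leqnn k) => [|n IH] k hk.
  move: hk; rewrite leqn0 => /eqP ->.
  by apply: (DPL_ext _ _ _ (DPL_mon 0)) => h _ q; rewrite Hrec0.
case: (leqP k n) => hkn; first exact: IH.
case: (leqP k m) => hkm.
  apply: (DPL_ext _ _ _ (DPL_hseries k _)) => [h _ q|]; first by rewrite Hrec_hs //; lia.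
  by lia.
set j := (k - m)%N.
apply: (DPL_ext (fun h => recRHS m (Hrec m h) j)).
  by move=> h _ q; rewrite Hrec_rec.
have D : forall i, (i <= n)%N -> DPL (fun h => Hrec m h i) by move=> i hi; apply: IH.
have bd : forall i : nat, forall h, Hyp h -> forall q, i%:Z < q -> lcoef (Hrec m h i) q = 0.
  by move=> i h _ q hq; rewrite Hrec_shape //; [have -> : (q == i%:Z) = false by lia | lia].
rewrite /recRHS.
apply: DPL_sub; first apply: DPL_sub.
- apply: DPL_add; first by apply: DPL_lder; apply: D; rewrite /j; lia.
  by apply: (DPL_mul _ _ _ _ (bd m) (bd j)); apply: D; rewrite /j; lia.
- apply: DPL_lsum1 => l hl; apply: DPL_scale; last by apply: D; rewrite /j; lia.
  by apply: D; lia.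
- apply: DPL_lsum1 => l hl; apply: DPL_scale; last by apply: D; lia.
  by apply: D; rewrite /j; lia.
Qed.

End Real3.



Theorem mainTheorem8 (R : realType) (m : nat) (hm : (1 <= m)%N) :
  (* shape of H^(j) and differential polynomiality of its coefficients *)
  (exists P : nat -> nat -> dpoly R,
     (forall j l, dvars_in m (P j l)) /\
     forall h : nat -> nat -> R -> R,
       (forall a l, (0 < a <= m)%N -> (0 < l)%N -> smooth (h a l)) ->
       forall j : nat,
         (forall p : int, 0 <= p -> lcoef (Hrec m h j) p = (p == j%:Z)%:R) /\
         (forall l : nat, (0 < l)%N -> negcoef (Hrec m h j) l = deval h (P j l)))
  /\
  (* the resulting curve is an integral curve of X_m *)
  (forall h : nat -> nat -> R -> R,
     (forall a l, (0 < a <= m)%N -> (0 < l)%N -> smooth (h a l)) ->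
     is_integral_curve m (fun k l => negcoef (Hrec m h k) l))
  /\
  (* its first m currents are the given ones *)
  (forall h : nat -> nat -> R -> R,
     (forall a l, (0 < a <= m)%N -> (0 < l)%N -> smooth (h a l)) ->
     forall a l, (0 < a <= m)%N -> (0 < l)%N -> negcoef (Hrec m h a) l = h a l)
  /\
  (* conversely every integral curve of X_m arises from its first m currents *)
  (forall C : nat -> nat -> R -> R,
     is_integral_curve m C ->
     forall k l, (0 < k)%N -> (0 < l)%N -> C k l = negcoef (Hrec m C k) l).
Proof.
have key : forall jl : nat * nat, exists p : dpoly R, dvars_in m p /\
    forall h, Hyp m h -> negcoef (Hrec m h jl.1) jl.2 = deval h p.
  by move=> [j l]; exact: (DPL_Hrec m hm j (- l%:Z)).
have [f hf] := choice key.
split.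
  exists (fun j l => f (j, l)); split; first by move=> j l; case: (hf (j, l)).
  move=> h hh j; split; first exact: Hrec_shape.
  by move=> l _; case: (hf (j, l)) => _ ->.
split.
  move=> h hh; split.
    move=> k l _ _; case: (hf (k, l)) => hv -> //.
    exact: (deval_smooth m h _ hh hv).
  by move=> k l x hk hl; apply: curve_eq.
split; first by move=> h _ a l ha hl; apply: part3.
by move=> C hC k l hk hl; apply: converse.
Qed.
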